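(* For all $x\in\mathbb{C}$ and all integers $n\ge0$, \[ \sum_{k=0}^n(-1)^kx^{n-k}\big(L_{k+1}+(x-2)F_k\big)=(-1)^nF_{n+1},\qquad \sum_{k=0}^n(-1)^kx^{n-k}\big(5F_{k+1}+(x-2)L_k\big)=(-1)^nL_{n+1}+2x^{n+1}, \] \[ \sum_{k=0}^n(-1)^kx^{n-k}\big(Q_{k+1}+2(x-1)P_k\big)=2(-1)^nP_{n+1},\qquad \sum_{k=0}^n(-1)^kx^{n-k}\big(4P_{k+1}+(x-1)Q_k\big)=(-1)^nQ_{n+1}+2x^{n+1}. \]
   Context: $F_n,L_n$ are the Fibonacci and Lucas numbers ($F_0=0,F_1=1,L_0=2,L_1=1$, $W_n=W_{n-1}+W_{n-2}$). $P_n,Q_n$ are the Pell and Pell–Lucas numbers: $P_0=0$, $P_1=1$, $Q_0=2$, $Q_1=2$, $W_n=2W_{n-1}+W_{n-2}$. *)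

(* Defs.v *)
From HB Require Import structures.
From mathcomp Require Import all_boot all_order all_algebra.
From mathcomp Require Export complex.
From mathcomp Require Export Rstruct.
From Stdlib Require Import Reals.
Set Implicit Arguments. Unset Strict Implicit. Unset Printing Implicit Defensive.

Definition CC := complex.complex R.

Fixpoint fib (n : nat) : nat :=
  match n with 0 => 0 | 1 => 1 | (m.+1 as p).+1 => fib p + fib m end.
Fixpoint lucas (n : nat) : nat :=
  match n with 0 => 2 | 1 => 1 | (m.+1 as p).+1 => lucas p + lucas m end.
Fixpoint pell (n : nat) : nat :=
  match n with 0 => 0 | 1 => 1 | (m.+1 as p).+1 => 2 * pell p + pell m end.
Fixpoint pell_lucas (n : nat) : nat :=
  match n with 0 => 2 | 1 => 2 | (m.+1 as p).+1 => 2 * pell_lucas p + pell_lucas m end.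

(* Main.v *)
Require Import Defs.
From mathcomp Require Import all_boot all_order all_algebra complex Rstruct.
From mathcomp Require Import ring zify.
Import GRing.Theory Num.Theory.
Local Open Scope ring_scope.

Lemma idF n : (lucas n.+2 = fib n.+2 + 2 * fib n.+1)%N /\ (lucas n.+3 = fib n.+3 + 2 * fib n.+2)%N.
Proof. elim: n => [|n [IH1 IH2]]; first by []. split; first exact IH2.
change (lucas n.+4) with (lucas n.+3 + lucas n.+2)%N.
change (fib n.+4) with (fib n.+3 + fib n.+2)%N.
change (fib n.+3) with (fib n.+2 + fib n.+1)%N in *. lia. Qed.

Lemma idL n : (5 * fib n.+2 = lucas n.+2 + 2 * lucas n.+1)%N /\ (5 * fib n.+3 = lucas n.+3 + 2 * lucas n.+2)%N.
Proof. elim: n => [|n [IH1 IH2]]; first by []. split; first exact IH2.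
change (lucas n.+4) with (lucas n.+3 + lucas n.+2)%N.
change (fib n.+4) with (fib n.+3 + fib n.+2)%N.
change (lucas n.+3) with (lucas n.+2 + lucas n.+1)%N in *.
change (fib n.+3) with (fib n.+2 + fib n.+1)%N in *. lia. Qed.

Lemma idP n : (pell_lucas n.+2 = 2 * pell n.+2 + 2 * pell n.+1)%N /\ (pell_lucas n.+3 = 2 * pell n.+3 + 2 * pell n.+2)%N.
Proof. elim: n => [|n [IH1 IH2]]; first by []. split; first exact IH2.
change (pell_lucas n.+4) with (2 * pell_lucas n.+3 + pell_lucas n.+2)%N.
change (pell n.+4) with (2 * pell n.+3 + pell n.+2)%N.
change (pell n.+3) with (2 * pell n.+2 + pell n.+1)%N in *. lia. Qed.

Lemma idQ n : (4 * pell n.+2 = pell_lucas n.+2 + pell_lucas n.+1)%N /\ (4 * pell n.+3 = pell_lucas n.+3 + pell_lucas n.+2)%N.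
Proof. elim: n => [|n [IH1 IH2]]; first by []. split; first exact IH2.
change (pell_lucas n.+4) with (2 * pell_lucas n.+3 + pell_lucas n.+2)%N.
change (pell n.+4) with (2 * pell n.+3 + pell n.+2)%N.
change (pell_lucas n.+3) with (2 * pell_lucas n.+2 + pell_lucas n.+1)%N in *.
change (pell n.+3) with (2 * pell n.+2 + pell n.+1)%N in *. lia. Qed.

Lemma sumrec (x : CC) (t : nat -> CC) n :
  \sum_(0 <= k < n.+2) (-1) ^+ k * x ^+ (n.+1 - k)%N * t k =
  x * \sum_(0 <= k < n.+1) (-1) ^+ k * x ^+ (n - k)%N * t k
  + (-1) ^+ n.+1 * t n.+1.
Proof.
rewrite big_nat_recr //= subnn expr0 mulr1; congr (_ + _).
rewrite big_distrr /=; apply: eq_big_nat => k /andP [_ Hk].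
by rewrite subSn // exprS; ring.
Qed.

Theorem corollary10 (x : CC) (n : nat) :
  [/\ \sum_(0 <= k < n.+1) (-1) ^+ k * x ^+ (n - k)%N
        * ((lucas k.+1)%:R + (x - 2) * (fib k)%:R) = (-1) ^+ n * (fib n.+1)%:R,
      \sum_(0 <= k < n.+1) (-1) ^+ k * x ^+ (n - k)%N
        * (5 * (fib k.+1)%:R + (x - 2) * (lucas k)%:R)
        = (-1) ^+ n * (lucas n.+1)%:R + 2 * x ^+ n.+1,
      \sum_(0 <= k < n.+1) (-1) ^+ k * x ^+ (n - k)%N
        * ((pell_lucas k.+1)%:R + 2 * (x - 1) * (pell k)%:R)
        = 2 * ((-1) ^+ n * (pell n.+1)%:R) &
      \sum_(0 <= k < n.+1) (-1) ^+ k * x ^+ (n - k)%N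
        * (4 * (pell k.+1)%:R + (x - 1) * (pell_lucas k)%:R)
        = (-1) ^+ n * (pell_lucas n.+1)%:R + 2 * x ^+ n.+1].
Proof.
elim: n => [|n [IH1 IH2 IH3 IH4]].
  split; rewrite big_nat1 /= ?expr0 ?expr1 ?mulr1 ?mul1r; ring.
split; rewrite sumrec ?IH1 ?IH2 ?IH3 ?IH4.
- have [H _] := idF n; rewrite H natrD natrM exprS; ring.
- have [H _] := idL n.
  have H' : (5 * (fib n.+2)%:R : CC) = (lucas n.+2)%:R + 2 * (lucas n.+1)%:R.
    by rewrite -[5]/(5%:R) -[2]/(2%:R) -!natrM H natrD.
  rewrite H' !exprS; ring.
- have [H _] := idP n; rewrite H natrD !natrM exprS; ring.
- have [H _] := idQ n.
  have H' : (4 * (pell n.+2)%:R : CC) = (pell_lucas n.+2)%:R + (pell_lucas n.+1)%:R.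
    by rewrite -[4]/(4%:R) -natrM H natrD.
  rewrite H' !exprS; ring.
Qed.
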